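(* Fix an instance and a set $S$ of its jobs (e.g. the jobs of an optimum schedule). With respect to the random hierarchical decomposition (random offset $r_0$ chosen uniformly in $[0,T/q]$), the expected number of jobs of $S$ that are span-crossing is at most $\frac{\lambda+1}{q}|S|=O(\varepsilon|S|)$.
   Context: Jobs $j$ have integer release time $r_j$, deadline $d_j$ and processing time $p_j$ in $[0,T]$; $span_j=[r_j,d_j]$ and $|span_j|=d_j-r_j$. Fix $\varepsilon>0$ with $q=1/\varepsilon^2$ an integer, $\lambda=1/\varepsilon=\varepsilon q$, $k=\log_q T$ (assume $T$ is a power of $q$), and $\ell_i=T/q^{i+1}$ for $i\ge 0$. Random hierarchical decomposition: pick $r_0$ uniformly at random in $[0,T/q]$; for each $0\le i\le k$, the partition $I_i$ of $[0,T]$ consists of the intervals between consecutive points of $\{0,T\}\cup\big(\{r_0+s\ell_i: s\in\mathbb{Z}\}\cap(0,T)\big)$, so all intervals of $I_i$ have length $\ell_i$ except possibly the first and last, whose lengths sum to $\ell_i$; each interval of $I_i$ is a union of $q$ consecutive intervals of $I_{i+1}$ (first/last possibly fewer). Job classes: $j\in\mathcal{J}_0$ if $|span_j|\ge\lambda\ell_0$; $j\in\mathcal{J}_i$ ($1\le i\le k$) if $\lambda\ell_i\le|span_j|<\lambda\ell_{i-1}$; $j\in\mathcal{J}_{k+1}$ if $|span_j|<\lambda\ell_k$. A job $j$ is span-crossing if $j\in\mathcal{J}_i$ for some $2\le i\le k+1$ and $span_j$ intersects (in a set of positive length) more than one interval of $I_{i-2}$. *)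

(* Defs.v *)
From Stdlib Require Import Reals Lra List ZArith ClassicalEpsilon.
Open Scope R_scope.

Record job := Job { rel : nat; dl : nat; pt : nat }.

Definition Thor (q k : nat) : R := INR q ^ k.

Definition valid_job (q k : nat) (j : job) : Prop :=
  (rel j <= dl j)%nat /\ INR (dl j) <= Thor q k /\ INR (pt j) <= Thor q k.

Definition ell (q k i : nat) : R := Thor q k / INR q ^ (i + 1).

Definition breakpoint (q k : nat) (r0 : R) (i : nat) (x : R) : Prop :=
  x = 0 \/ x = Thor q k \/
  (exists s : Z, x = r0 + IZR s * ell q k i /\ 0 < x /\ x < Thor q k).

Definition part_interval (q k : nat) (r0 : R) (i : nat) (a b : R) : Prop :=
  a < b /\ breakpoint q k r0 i a /\ breakpoint q k r0 i b /\
  (forall x, a < x < b -> ~ breakpoint q k r0 i x).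

Definition span_len (j : job) : R := INR (dl j) - INR (rel j).

Definition meets_pos (j : job) (a b : R) : Prop :=
  Rmax (INR (rel j)) a < Rmin (INR (dl j)) b.

Definition in_class (eps : R) (q k i : nat) (j : job) : Prop :=
  let lam := 1 / eps in
  if Nat.eqb i 0 then lam * ell q k 0 <= span_len j
  else if Nat.leb i k then
    lam * ell q k i <= span_len j /\ span_len j < lam * ell q k (i - 1)
  else if Nat.eqb i (k + 1) then span_len j < lam * ell q k k
  else False.

Definition span_crossing (eps : R) (q k : nat) (r0 : R) (j : job) : Prop :=
  exists i : nat, (2 <= i <= k + 1)%nat /\ in_class eps q k i j /\
  exists a1 b1 a2 b2 : R,
    part_interval q k r0 (i - 2) a1 b1 /\ part_interval q k r0 (i - 2) a2 b2 /\
    (a1, b1) <> (a2, b2) /\ meets_pos j a1 b1 /\ meets_pos j a2 b2.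

(* number of jobs of S (a list; repeated entries are distinct jobs)
   that are span-crossing for offset r0 *)
Definition num_crossing (eps : R) (q k : nat) (S : list job) (r0 : R) : R :=
  fold_right (fun j acc =>
    (if excluded_middle_informative (span_crossing eps q k r0 j) then 1 else 0) + acc)
    0 S.

(* Main.v *)
Require Import Defs.
From Stdlib Require Import Reals Lra Lia ZArith Classical ClassicalEpsilon List.
From Coquelicot Require Import Coquelicot.
Open Scope R_scope.

Lemma my_const a b (v:R): is_RInt (fun _ => v) a b ((b-a)*v).
Proof. exact (is_RInt_const a b v). Qed.
Lemma my_chasles (f:R->R) a b c l1 l2 : is_RInt f a b l1 -> is_RInt f b c l2 -> is_RInt f a c (l1+l2).
Proof. exact (@is_RInt_Chasles _ f a b c l1 l2). Qed.
Lemma my_ext (f g:R->R) a b l : a <= b -> (forall x, a < x < b -> f x = g x) ->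
  is_RInt f a b l -> is_RInt g a b l.
Proof. intros H E. apply is_RInt_ext. intros x Hx. apply E.
  rewrite Rmin_left in Hx by exact H. rewrite Rmax_right in Hx by exact H. exact Hx. Qed.

Definition hh (r d E x : R) : R :=
  if excluded_middle_informative (exists s : Z, r < x + IZR s * E < d) then 1 else 0.

Lemma hh_1 r d E x : (exists s : Z, r < x + IZR s * E < d) -> hh r d E x = 1.
Proof. intros H. unfold hh. destruct excluded_middle_informative; tauto. Qed.
Lemma hh_0 r d E x : ~ (exists s : Z, r < x + IZR s * E < d) -> hh r d E x = 0.
Proof. intros H. unfold hh. destruct excluded_middle_informative; tauto. Qed.

Lemma hh_per r d E x n : hh r d E (x + IZR n * E) = hh r d E x.
Proof.
  unfold hh. destruct excluded_middle_informative as [[s Hs]|H1];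
  destruct excluded_middle_informative as [[s' Hs']|H2]; auto.
  - exfalso. apply H2. exists (s + n)%Z. rewrite plus_IZR. nra.
  - exfalso. apply H1. exists (s' - n)%Z. rewrite minus_IZR. nra.
Qed.

Lemma window r d E m a : 0 < E -> 0 <= d - r <= E -> a = r - IZR m * E ->
  is_RInt (hh r d E) a (a + E) (d - r).
Proof.
  intros HE HL Ha.
  replace (d - r) with ((d - r) * 1 + (E - (d - r)) * 0) by ring.
  apply my_chasles with (b := a + (d - r)).
  - apply my_ext with (f := fun _ => 1). lra.
    + intros x Hx. symmetry. apply hh_1. exists m. lra.
    + replace ((d-r)*1) with ((a + (d-r) - a) * 1) by ring. apply my_const.
  - apply my_ext with (f := fun _ => 0). lra.
    + intros x Hx. symmetry. apply hh_0. intros [s Hs].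
      assert (Ht: r < x + IZR s * E < d) by exact Hs.
      destruct (Z_le_gt_dec m s) as [Hms|Hms].
      * apply IZR_le in Hms. nra.
      * assert (Hms' : (s <= m - 1)%Z) by lia. apply IZR_le in Hms'.
        rewrite minus_IZR in Hms'. nra.
    + replace ((E - (d-r))*0) with ((a + E - (a + (d-r))) * 0) by ring. apply my_const.
Qed.

Lemma multi r d E m M : 0 < E -> 0 <= d - r <= E ->
  is_RInt (hh r d E) (r - IZR m * E) (r - IZR m * E + INR M * E) (INR M * (d - r)).
Proof.
  intros HE HL. induction M.
  - simpl. replace (r - IZR m * E + 0 * E) with (r - IZR m * E) by ring.
    replace (0 * (d - r)) with 0 by ring.
    exact (@is_RInt_point _ (hh r d E) (r - IZR m * E)).
  - rewrite S_INR.
    replace ((INR M + 1) * (d - r)) with (INR M * (d - r) + (d - r)) by ring.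
    apply my_chasles with (b := r - IZR m * E + INR M * E). exact IHM.
    replace (r - IZR m * E + (INR M + 1) * E) with (r - IZR m * E + INR M * E + E) by ring.
    apply window with (m := (m - Z.of_nat M)%Z); auto.
    rewrite minus_IZR, <- INR_IZR_INZ. ring.
Qed.

Lemma shift r d E n c I : is_RInt (hh r d E) 0 c I ->
  is_RInt (hh r d E) (IZR n * E) (IZR n * E + c) I.
Proof.
  intros H.
  assert (H2 := @is_RInt_comp_lin _ (hh r d E) 1 (- (IZR n * E)) (IZR n * E) (IZR n * E + c) I).
  assert (H3 : is_RInt (hh r d E) (1 * (IZR n * E) + - (IZR n * E)) (1 * (IZR n * E + c) + - (IZR n * E)) I).
  { replace (1 * (IZR n * E) + - (IZR n * E)) with 0 by ring.
    replace (1 * (IZR n * E + c) + - (IZR n * E)) with c by ring. exact H. }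
  specialize (H2 H3).
  apply is_RInt_ext with (2 := H2).
  intros x _. change (1 * hh r d E (1 * x + - (IZR n * E)) = hh r d E x).
  replace (1 * x + - (IZR n * E)) with (x + IZR (- n) * E) by (rewrite opp_IZR; ring).
  rewrite hh_per. ring.
Qed.

Lemma main_int r d E M : 0 < E -> 0 <= d - r <= E -> (1 <= M)%nat ->
  is_RInt (hh r d E) 0 (INR M * E) (INR M * (d - r)).
Proof.
  intros HE HL HM.
  set (m := (up (r / E) - 1)%Z).
  destruct (archimed (r / E)) as [A1 A2].
  assert (Hm : IZR m = IZR (up (r/E)) - 1) by (unfold m; rewrite minus_IZR; reflexivity).
  set (r' := r - IZR m * E).
  assert (Hr'0 : 0 <= r').
  { unfold r'. rewrite Hm. assert (IZR (up (r/E)) - 1 <= r / E) by lra.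
    assert ((IZR (up (r/E)) - 1) * E <= r / E * E) by nra.
    replace (r / E * E) with r in H0 by (field; lra). lra. }
  assert (Hr'1 : r' < E).
  { unfold r'. rewrite Hm. assert (r/E - 1 < IZR (up (r/E)) - 1) by lra.
    assert ((r/E - 1) * E < (IZR (up (r/E)) - 1) * E) by nra.
    replace ((r / E - 1) * E) with (r - E) in H0 by (field; lra). lra. }
  assert (HM1 : 1 <= INR M) by (apply (le_INR 1); exact HM).
  assert (W1 := multi r d E m M HE HL). fold r' in W1.
  assert (W0 : is_RInt (hh r d E) (r' - E) r' (d - r)).
  { replace r' with (r' - E + E) at 2 by ring. apply window with (m := (m + 1)%Z); auto.
    unfold r'. rewrite plus_IZR. ring. }
  assert (X0 : ex_RInt (hh r d E) 0 r').
  { apply (@ex_RInt_Chasles_2 R_CompleteNormedModule) with (a := r' - E). lra. eexists; exact W0. }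
  assert (I0 := @RInt_correct R_CompleteNormedModule _ _ _ X0).
  assert (S0 := shift r d E (Z.of_nat M) r' _ I0). rewrite <- INR_IZR_INZ in S0.
  assert (X1 : ex_RInt (hh r d E) r' (INR M * E)).
  { apply (@ex_RInt_Chasles_1 R_CompleteNormedModule) with (c := r' + INR M * E). nra. eexists; exact W1. }
  assert (I1 := @RInt_correct R_CompleteNormedModule _ _ _ X1).
  assert (C1 := my_chasles _ _ _ _ _ _ I1 S0).
  rewrite Rplus_comm in W1.
  assert (Eq := @is_RInt_unique R_CompleteNormedModule _ _ _ _ C1). rewrite (@is_RInt_unique R_CompleteNormedModule _ _ _ _ W1) in Eq.
  assert (C2 := my_chasles _ _ _ _ _ _ I0 I1).
  replace (INR M * (d - r)) with (RInt (hh r d E) 0 r' + RInt (hh r d E) r' (INR M * E)) by lra.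
  exact C2.
Qed.
Lemma ell_pos q k i : (1 <= q)%nat -> 0 < ell q k i.
Proof.
  intros Hq. assert (0 < INR q) by (apply lt_0_INR; lia).
  unfold ell, Thor. apply Rdiv_lt_0_compat; apply pow_lt; lra.
Qed.

Lemma ell_succ q k i : (1 <= q)%nat -> ell q k (S i) = ell q k i / INR q.
Proof.
  intros Hq. assert (0 < INR q) by (apply lt_0_INR; lia).
  unfold ell. replace (S i + 1)%nat with (S (i + 1)) by lia. simpl pow.
  assert (0 < INR q ^ (i+1)) by (apply pow_lt; lra). field. lra.
Qed.

Lemma ell_mono q k a b : (1 <= q)%nat -> (a <= b)%nat -> ell q k b <= ell q k a.
Proof.
  intros Hq Hab. assert (1 <= INR q) by (apply (le_INR 1); lia).
  induction Hab. lra. rewrite ell_succ by auto.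
  assert (0 < ell q k m) by (apply ell_pos; auto).
  apply Rle_trans with (ell q k m); auto.
  apply Rmult_le_reg_r with (INR q). lra. field_simplify; nra.
Qed.

Lemma ell_0_eq q k n : (1 <= q)%nat -> ell q k 0 = INR q ^ n * ell q k n.
Proof.
  intros Hq. assert (0 < INR q) by (apply lt_0_INR; lia).
  induction n. simpl; ring. rewrite ell_succ by auto. rewrite IHn. simpl. field. lra.
Qed.

Lemma class_upper eps q k i j : (2 <= i <= k + 1)%nat -> in_class eps q k i j ->
  span_len j < 1 / eps * ell q k (i - 1).
Proof.
  intros Hi H. unfold in_class in H.
  destruct (Nat.eqb i 0) eqn:E0. apply Nat.eqb_eq in E0; lia.
  destruct (Nat.leb i k) eqn:E1. tauto.
  apply Nat.leb_gt in E1. assert (i = k + 1)%nat by lia. subst i.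
  rewrite Nat.eqb_refl in H. replace (k + 1 - 1)%nat with k by lia. exact H.
Qed.

Lemma class_lower eps q k i j : (2 <= i <= k)%nat -> in_class eps q k i j ->
  1 / eps * ell q k i <= span_len j.
Proof.
  intros Hi H. unfold in_class in H.
  destruct (Nat.eqb i 0) eqn:E0. apply Nat.eqb_eq in E0; lia.
  destruct (Nat.leb i k) eqn:E1. tauto.
  apply Nat.leb_gt in E1. lia.
Qed.

Lemma class_unique eps q k i i' j : 0 < eps -> (1 <= q)%nat ->
  (2 <= i <= k + 1)%nat -> (2 <= i' <= k + 1)%nat ->
  in_class eps q k i j -> in_class eps q k i' j -> i = i'.
Proof.
  intros He Hq Hi Hi' H H'.
  assert (0 < 1 / eps) by (apply Rdiv_lt_0_compat; lra).
  destruct (Nat.lt_total i i') as [Hlt|[Heq|Hlt]]; auto; exfalso.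
  - assert (Hr : (2 <= i <= k)%nat) by lia.
    assert (A := class_lower _ _ _ i j Hr H).
    assert (B := class_upper _ _ _ i' j Hi' H').
    assert (ell q k (i' - 1) <= ell q k i) by (apply ell_mono; auto; lia). nra.
  - assert (Hr : (2 <= i' <= k)%nat) by lia.
    assert (A := class_lower _ _ _ i' j Hr H').
    assert (B := class_upper _ _ _ i j Hi H).
    assert (ell q k (i - 1) <= ell q k i') by (apply ell_mono; auto; lia). nra.
Qed.

Lemma Thor_pos q k : (1 <= q)%nat -> 0 < Thor q k.
Proof. intros Hq. unfold Thor. assert (0 < INR q) by (apply lt_0_INR; lia). apply pow_lt; lra. Qed.

Lemma bp_range q k r0 i x : (1 <= q)%nat -> breakpoint q k r0 i x -> 0 <= x <= Thor q k.
Proof.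
  intros Hq H. assert (T0 := Thor_pos q k Hq).
  destruct H as [H|[H|[s [H1 H2]]]]; subst; lra.
Qed.

Lemma int_gap (t : Z) E : 0 < E -> IZR t * E < E -> - E < IZR t * E -> t = 0%Z.
Proof.
  intros HE H1 H2.
  assert (IZR t < 1). { destruct (Rlt_le_dec (IZR t) 1); auto. nra. }
  assert (-1 < IZR t). { destruct (Rlt_le_dec (-1) (IZR t)); auto. nra. }
  apply lt_IZR in H. apply lt_IZR in H0. lia.
Qed.

Lemma crossing_level q k r0 j i : (1 <= q)%nat -> (2 <= i <= k + 1)%nat ->
  valid_job q k j ->
  ((exists a1 b1 a2 b2 : R,
    part_interval q k r0 (i - 2) a1 b1 /\ part_interval q k r0 (i - 2) a2 b2 /\
    (a1, b1) <> (a2, b2) /\ meets_pos j a1 b1 /\ meets_pos j a2 b2)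
  <-> exists s : Z, INR (rel j) < r0 + IZR s * ell q k (i - 2) < INR (dl j)).
Proof.
  intros Hq Hi [V1 [V2 V3]].
  set (E := ell q k (i - 2)). assert (HE : 0 < E) by (apply ell_pos; auto).
  set (T := Thor q k). fold T in V2.
  assert (Hr : 0 <= INR (rel j)) by apply pos_INR.
  split.
  - intros [a1 [b1 [a2 [b2 [P1 [P2 [Hne [M1 M2]]]]]]]].
    assert (key : forall a1 b1 a2 b2, part_interval q k r0 (i-2) a1 b1 ->
              part_interval q k r0 (i-2) a2 b2 -> meets_pos j a1 b1 -> meets_pos j a2 b2 ->
              b1 <= a2 -> exists s : Z, INR (rel j) < r0 + IZR s * E < INR (dl j)).
    { clear a1 b1 a2 b2 P1 P2 Hne M1 M2.
      intros a1 b1 a2 b2 [L1 [B1 [B1' N1]]] [L2 [B2 [B2' N2]]] M1 M2 Hle.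
      unfold meets_pos in M1, M2.
      assert (INR (rel j) <= Rmax (INR (rel j)) a1) by apply Rmax_l.
      assert (Rmin (INR (dl j)) b1 <= b1) by apply Rmin_r.
      assert (a2 <= Rmax (INR (rel j)) a2) by apply Rmax_r.
      assert (Rmin (INR (dl j)) b2 <= INR (dl j)) by apply Rmin_l.
      assert (R1 := bp_range _ _ _ _ _ Hq B1).
      destruct B1' as [Z|[Z|[s [Zs [Z1 Z2]]]]].
      + lra.
      + fold T in Z. lra.
      + exists s. fold E in Zs. lra. }
    pose proof P1 as [L1 [B1 [B1' N1]]]. pose proof P2 as [L2 [B2 [B2' N2]]].
    destruct (Rtotal_order a1 a2) as [H|[H|H]].
    + destruct (Rle_lt_dec b1 a2). apply (key a1 b1 a2 b2); auto.
      exfalso. apply (N1 a2). split; lra. exact B2.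
    + destruct (Rtotal_order b1 b2) as [H'|[H'|H']].
      * exfalso; apply (N2 b1). split; lra. exact B1'.
      * exfalso. apply Hne. rewrite H, H'. reflexivity.
      * exfalso; apply (N1 b2). split; lra. exact B2'.
    + destruct (Rle_lt_dec b2 a1). apply (key a2 b2 a1 b1); auto.
      exfalso. apply (N2 a1). split; lra. exact B1.
  - intros [s Hs]. fold E in Hs. set (x := r0 + IZR s * E) in *.
    assert (Hx0 : 0 < x) by lra. assert (HxT : x < T) by lra.
    assert (Bx : breakpoint q k r0 (i-2) x) by (right; right; exists s; auto).
    set (p := if Rlt_dec 0 (x - E) then x - E else 0).
    set (n := if Rlt_dec (x + E) T then x + E else T).
    assert (Hp : 0 <= p /\ x - E <= p /\ p < x).
    { unfold p; destruct (Rlt_dec 0 (x - E)); lra. }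
    assert (Hn : n <= T /\ n <= x + E /\ x < n).
    { unfold n; destruct (Rlt_dec (x + E) T); lra. }
    assert (Bp : breakpoint q k r0 (i-2) p).
    { unfold p; destruct (Rlt_dec 0 (x - E)). right; right. exists (s - 1)%Z. rewrite minus_IZR.
      fold E. unfold x in *. split. ring. fold T. lra. left; auto. }
    assert (Bn : breakpoint q k r0 (i-2) n).
    { unfold n; destruct (Rlt_dec (x + E) T). right; right. exists (s + 1)%Z. rewrite plus_IZR.
      fold E. unfold x in *. split. ring. fold T. lra. right; left; auto. }
    exists p, x, x, n. split; [|split; [|split; [|split]]].
    + split. lra. split. auto. split. auto.
      intros z Hz [Z|[Z|[s' [Zs [Z1 Z2]]]]]. lra. fold T in Z; lra.
      fold E in Zs. assert (G := int_gap (s' - s) E HE).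
      rewrite minus_IZR in G. assert ((s' - s)%Z = 0%Z) by (apply G; unfold x in *; nra).
      assert (s' = s) by lia. subst s'. unfold x in *. lra.
    + split. lra. split. auto. split. auto.
      intros z Hz [Z|[Z|[s' [Zs [Z1 Z2]]]]]. lra. fold T in Z; lra.
      fold E in Zs. assert (G := int_gap (s' - s) E HE).
      rewrite minus_IZR in G. assert ((s' - s)%Z = 0%Z) by (apply G; unfold x in *; nra).
      assert (s' = s) by lia. subst s'. unfold x in *. lra.
    + intros Heq. injection Heq. lra.
    + unfold meets_pos. apply Rmax_lub_lt; apply Rmin_glb_lt; lra.
    + unfold meets_pos. apply Rmax_lub_lt; apply Rmin_glb_lt; lra.
Qed.

Definition ind eps q k j r0 : R :=
  if excluded_middle_informative (span_crossing eps q k r0 j) then 1 else 0.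

Lemma job_int eps q k j : 0 < eps -> INR q = 1 / eps ^ 2 -> valid_job q k j ->
  exists I, is_RInt (ind eps q k j) 0 (Thor q k / INR q) I /\
    I <= Thor q k / INR q * ((1 / eps + 1) / INR q).
Proof.
  intros He Hq Hv.
  assert (Hq0 : 0 < INR q) by (rewrite Hq; apply Rdiv_lt_0_compat; [lra | apply pow_lt; lra]).
  assert (Hq1 : (1 <= q)%nat).
  { destruct q. simpl in Hq0; lra. lia. }
  assert (Hq1' : 1 <= INR q) by (apply (le_INR 1); exact Hq1).
  assert (Heps1 : eps <= 1).
  { rewrite Hq in Hq1'. destruct (Rle_lt_dec eps 1); auto.
    exfalso. assert (1 < eps ^ 2) by nra.
    assert (1 / eps ^ 2 < 1). { apply Rmult_lt_reg_r with (eps ^ 2). lra.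
      field_simplify; lra. } lra. }
  assert (HB : Thor q k / INR q = ell q k 0).
  { unfold ell. simpl. f_equal. ring. }
  assert (HBpos : 0 < Thor q k / INR q) by (rewrite HB; apply ell_pos; auto).
  assert (Hbnd : 0 <= Thor q k / INR q * ((1 / eps + 1) / INR q)).
  { apply Rmult_le_pos. lra. apply Rdiv_le_0_compat; [|lra].
    assert (0 < 1/eps) by (apply Rdiv_lt_0_compat; lra). lra. }
  destruct (classic (exists i, (2 <= i <= k + 1)%nat /\ in_class eps q k i j)) as [[i [Hi Hc]]|Hno].
  - set (E := ell q k (i - 2)). assert (HE : 0 < E) by (apply ell_pos; auto).
    destruct Hv as [V1 [V2 V3]].
    assert (Hrd : INR (rel j) <= INR (dl j)) by (apply le_INR; exact V1).
    assert (Hup := class_upper _ _ _ _ _ Hi Hc).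
    assert (Hel : ell q k (i - 1) = E / INR q).
    { unfold E. replace (i - 1)%nat with (S (i - 2)) by lia. apply ell_succ; auto. }
    assert (HL : span_len j < eps * E).
    { rewrite Hel in Hup. replace (eps * E) with (1 / eps * (E / INR q)); auto.
      rewrite Hq. field. lra. }
    unfold span_len in HL.
    assert (HLE : 0 <= INR (dl j) - INR (rel j) <= E) by (split; nra).
    set (M := (q ^ (i - 2))%nat).
    assert (HM : (1 <= M)%nat).
    { unfold M. assert (q ^ (i-2) <> 0)%nat by (apply Nat.pow_nonzero; lia). lia. }
    assert (HME : INR M * E = Thor q k / INR q).
    { rewrite HB. unfold M. rewrite pow_INR. symmetry. apply ell_0_eq; auto. }
    assert (Mi := main_int (INR (rel j)) (INR (dl j)) E M HE HLE HM).
    rewrite HME in Mi.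
    exists (INR M * (INR (dl j) - INR (rel j))). split.
    + apply my_ext with (2 := fun x _ => eq_refl) in Mi; [|lra].
      apply is_RInt_ext with (2 := Mi). intros x _. unfold ind, hh.
      assert (Eq : span_crossing eps q k x j <->
                   exists s : Z, INR (rel j) < x + IZR s * E < INR (dl j)).
      { unfold E. rewrite <- (crossing_level q k x j i Hq1 Hi (conj V1 (conj V2 V3))).
        unfold span_crossing. split.
        - intros [i' [Hi' [Hc' X]]].
          assert (i' = i) by (apply (class_unique eps q k i' i j); auto). subst i'. exact X.
        - intros X. exists i. auto. }
      destruct (excluded_middle_informative (exists s : Z, INR (rel j) < x + IZR s * E < INR (dl j)));
      destruct (excluded_middle_informative (span_crossing eps q k x j)); tauto.
    + assert (HM0 : 0 < INR M) by (apply lt_0_INR; lia).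
      apply Rle_trans with (INR M * (eps * E)). nra.
      replace (INR M * (eps * E)) with (eps * (INR M * E)) by ring. rewrite HME.
      rewrite Rmult_comm. apply Rmult_le_compat_l. lra.
      rewrite Hq. replace ((1 / eps + 1) / (1 / eps ^ 2)) with (eps + eps ^ 2) by (field; lra).
      nra.
  - exists 0. split; auto.
    replace 0 with ((Thor q k / INR q - 0) * 0) at 2 by ring.
    apply is_RInt_ext with (2 := my_const 0 (Thor q k / INR q) 0).
    intros x _. unfold ind. destruct excluded_middle_informative as [[i [Hi [Hc _]]]|]; auto.
    exfalso; apply Hno; eauto.
Qed.

Lemma list_int eps q k S : 0 < eps -> INR q = 1 / eps ^ 2 ->
  (forall j, In j S -> valid_job q k j) ->
  exists I, is_RInt (num_crossing eps q k S) 0 (Thor q k / INR q) I /\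
    I <= Thor q k / INR q * ((1 / eps + 1) / INR q) * INR (length S).
Proof.
  intros He Hq. induction S as [|j S IH]; intros Hv.
  - exists 0. split. replace 0 with ((Thor q k / INR q - 0) * 0) at 2 by ring.
    exact (my_const 0 (Thor q k / INR q) 0). simpl; lra.
  - destruct IH as [I [H1 H2]]. intros; apply Hv; right; auto.
    destruct (job_int eps q k j He Hq) as [J [H3 H4]]. apply Hv; left; auto.
    exists (J + I). split.
    + assert (P := @is_RInt_plus _ _ _ _ _ _ _ H3 H1).
      apply is_RInt_ext with (2 := P). intros x _. reflexivity.
    + change (length (j :: S)) with (Datatypes.S (length S)). rewrite S_INR. lra.
Qed.

Theorem mainTheorem6 (eps : R) (q k : nat) (S : list job) :
  0 < eps ->
  INR q = 1 / eps ^ 2 ->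
  (forall j, In j S -> valid_job q k j) ->
  exists pr : Riemann_integrable (num_crossing eps q k S) 0 (Thor q k / INR q),
    RiemannInt pr / (Thor q k / INR q) <= (1 / eps + 1) / INR q * INR (length S).
Proof.
  intros He Hq Hv.
  destruct (list_int eps q k S He Hq Hv) as [I [H1 H2]].
  assert (Hq0 : 0 < INR q) by (rewrite Hq; apply Rdiv_lt_0_compat; [lra | apply pow_lt; lra]).
  assert (Hq1 : (1 <= q)%nat) by (destruct q; [simpl in Hq0; lra | lia]).
  assert (HBpos : 0 < Thor q k / INR q) by (apply Rdiv_lt_0_compat; auto; apply Thor_pos; auto).
  exists (ex_RInt_Reals_0 _ _ _ (ex_intro _ I H1)).
  rewrite <- RInt_Reals. rewrite (@is_RInt_unique R_CompleteNormedModule _ _ _ _ H1).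
  apply Rmult_le_reg_r with (Thor q k / INR q). exact HBpos.
  unfold Rdiv at 1. rewrite Rmult_assoc, Rinv_l, Rmult_1_r by lra. nra.
Qed.
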